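(* Let $\mathbb{K}$ be a field and let $M\in M_n(\mathbb{K})$ be $\mathbb{K}$-regular. Then there exists a unique complete additive Jordan–Chevalley decomposition over $\mathbb{K}$ of $M$, $M = H(M)+V(M)+N(M)$. Moreover $H(M)$, $V(M)$, $N(M)$ are polynomial expressions of $M$ with coefficients in $\mathbb{K}$, and $H(M)+V(M)$ and $N(M)$ coincide respectively with the semisimple and the nilpotent components of the additive Jordan–Chevalley decomposition of $M$.
   Context: An element of $\overline{\mathbb{K}}$ (fixed algebraic closure) is $\mathbb{K}$-regular if its degree over $\mathbb{K}$ is not a multiple of $char(\mathbb{K})$; $\mathcal{R}_\mathbb{K}$ is the set of such elements. For $\lambda\in\mathcal{R}_\mathbb{K}$ with monic minimal polynomial $X^d+a_{d-1}X^{d-1}+\cdots+a_0$, $H_\mathbb{K}(\lambda)=-a_{d-1}/d$ and $Ker(H_\mathbb{K})=\{\lambda\in\mathcal{R}_\mathbb{K}:H_\mathbb{K}(\lambda)=0\}$. A matrix in $M_n(\mathbb{K})$ is $\mathbb{K}$-regular if all its eigenvalues lie in $\mathcal{R}_\mathbb{K}$; a $\mathbb{K}$-regular matrix is $\mathbb{K}$-vertical if all its eigenvalues lie in $Ker(H_\mathbb{K})$. A complete additive Jordan–Chevalley decomposition over $\mathbb{K}$ of $M\in M_n(\mathbb{K})$ is a decomposition $M=H+V+N$ with $H,V,N\in M_n(\mathbb{K})$ mutually commuting, $H$ diagonalizable over $\mathbb{K}$, $V$ $\mathbb{K}$-vertical and semisimple (diagonalizable over $\overline{\mathbb{K}}$),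 and $N$ nilpotent. The additive Jordan–Chevalley decomposition is the unique decomposition $M=S+N$ with $S$ semisimple, $N$ nilpotent, $SN=NS$. *)

(* Defs.v *)
From HB Require Import structures.
From mathcomp Require Import all_boot all_order all_algebra.
Set Implicit Arguments. Unset Strict Implicit. Unset Printing Implicit Defensive.
Import Order.TTheory GRing.Theory Num.Theory.
Local Open Scope ring_scope.

(* Setting: a field K, an algebraically closed field L together with an
   embedding iota : K -> L making L algebraic over K (a fixed algebraic
   closure of K). *)

Section Defs.
Variables (K : fieldType) (L : closedFieldType) (iota : {rmorphism K -> L}).

Definition algebraic_over : Prop :=
  forall x : L, exists2 p : {poly K}, p != 0 & root (map_poly iota p) x.

Definition is_minpoly (p : {poly K}) (lam : L) : Prop :=
  [/\ p \is monic, root (map_poly iota p) lam &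
      forall q : {poly K}, q != 0 -> root (map_poly iota q) lam ->
        (size p <= size q)%N].

(* degree d not a multiple of char K (vacuous in characteristic 0) *)
Definition deg_not_mult_char (d : nat) : Prop :=
  forall p : nat, p \in [pchar K] -> ~~ (p %| d)%N.

Definition K_regular_elt (lam : L) : Prop :=
  exists2 p : {poly K}, is_minpoly p lam & deg_not_mult_char (size p).-1.

(* lam in Ker(H_K): K-regular with H_K(lam) = - a_{d-1} / d = 0 *)
Definition in_ker_H (lam : L) : Prop :=
  exists p : {poly K},
    [/\ is_minpoly p lam, deg_not_mult_char (size p).-1 &
        - p`_((size p).-1.-1) / ((size p).-1)%:R = 0].

Variable n : nat.

Definition K_regular_mx (M : 'M[K]_n) : Prop :=
  forall lam : L, eigenvalue (map_mx iota M) lam -> K_regular_elt lam.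

Definition K_vertical_mx (M : 'M[K]_n) : Prop :=
  K_regular_mx M /\
  forall lam : L, eigenvalue (map_mx iota M) lam -> in_ker_H lam.

(* semisimple: diagonalizable over the algebraic closure *)
Definition semisimple_mx (M : 'M[K]_n) : Prop :=
  diagonalizable (map_mx iota M).

Definition nilpotent_mx (M : 'M[K]_n) : Prop :=
  exists k : nat, M ^+ k = 0.

Definition complete_JC (M H V N : 'M[K]_n) : Prop :=
  [/\ M = H + V + N,
      [/\ comm_mx H V, comm_mx H N & comm_mx V N],
      diagonalizable H,
      K_vertical_mx V /\ semisimple_mx V &
      nilpotent_mx N].

Definition additive_JC (M S N : 'M[K]_n) : Prop :=
  [/\ M = S + N, semisimple_mx S, nilpotent_mx N & comm_mx S N].

Definition poly_mx (p : {poly K}) (M : 'M[K]_n) : 'M[K]_n :=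
  \sum_(i < size p) p`_i *: M ^+ i.

Definition is_poly_in (M A : 'M[K]_n) : Prop :=
  exists p : {poly K}, A = poly_mx p M.

End Defs.

(* Main.v *)
Require Import Defs.
From HB Require Import structures.
From mathcomp Require Import all_boot all_order all_algebra.
From mathcomp Require Import zify ring.
Import Order.TTheory GRing.Theory Num.Theory.
Local Open Scope ring_scope.
Set Implicit Arguments. Unset Strict Implicit. Unset Printing Implicit Defensive.

Section Poly1.
Variables (K : fieldType) (L : closedFieldType) (iota : {rmorphism K -> L}).
Local Notation fp := (map_poly iota).
Local Notation mp := (is_minpoly iota).

Lemma mp_monic f a : mp f a -> f \is monic.
Proof. by case. Qed.

Lemma mp_neq0 f a : mp f a -> f != 0.
Proof. by move=> /mp_monic /monic_neq0. Qed.

Lemma mp_root f a : mp f a -> root (fp f) a.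
Proof. by case. Qed.

Lemma mp_size f a : mp f a -> (1 < size f)%N.
Proof.
move=> h; have := root_size_gt1 _ (mp_root h).
by rewrite size_map_poly map_poly_eq0; apply; apply: mp_neq0 h.
Qed.

Lemma mp_dvd f a q : mp f a -> root (fp q) a -> f %| q.
Proof.
move=> [fm fr fmin] qr; apply/modp_eq0P; apply/eqP; apply: contraT => r0.
have : root (fp (q %% f)) a.
  move: qr; rewrite {1}(divp_eq q f) rmorphD rmorphM /= /root hornerD hornerM.
  by rewrite (eqP fr) mulr0 add0r.
move=> /(fmin _ r0); rewrite leqNgt ltn_modp monic_neq0 //.
Qed.

Lemma mp_uniq f g x : mp f x -> mp g x -> f = g.
Proof.
move=> hf hg; have fg := mp_dvd hf (mp_root hg).
have gf := mp_dvd hg (mp_root hf).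
apply/eqP; rewrite -eqp_monic ?(mp_monic hf) ?(mp_monic hg) //.
by rewrite /eqp fg gf.
Qed.

Lemma mp_trans f a x : mp f a -> root (fp f) x -> mp f x.
Proof.
move=> hf rx; have [fm fr fmin] := hf; split => // q q0 qx.
set r := gcdp f q.
have rx' : root (fp r) x by rewrite /r gcdp_map root_gcd rx.
have r0 : r != 0 by rewrite gcdp_eq0 negb_and q0 orbT.
have r1 : (1 < size r)%N.
  by have := root_size_gt1 _ rx'; rewrite size_map_poly map_poly_eq0; apply.
have rf : r %| f by rewrite dvdp_gcdl.
have rq : r %| q by rewrite dvdp_gcdr.
have [t ft] := dvdpP _ _ rf.
have t0 : t != 0.
  by apply/eqP => t0; move: (monic_neq0 fm); rewrite ft t0 mul0r eqxx.
have : root (fp t) a || root (fp r) a.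
  by move: fr; rewrite ft rmorphM /= rootM.
case/orP => [/(fmin _ t0)|/(fmin _ r0)].
  rewrite ft (size_mul t0 r0) => h; exfalso; move: h r1; clear; move: (size t) (size r) => a b; lia.
move=> h; apply: leq_trans h _; exact: dvdp_leq.
Qed.
End Poly1.

Section Poly2.
Variable (R : fieldType).

Lemma compXaddC_top (p : {poly R}) c j : (size p <= j.+1)%N ->
  (p \Po ('X + c%:P))`_j = p`_j.
Proof.
move=> hs; have hsz : size (p \Po ('X + c%:P)) = size p by rewrite size_comp_poly2 ?size_XaddC.
case: (ltngtP (size p) j.+1) hs => // [hlt _|heq _].
  by rewrite !nth_default // ?hsz //; apply: leq_trans hlt _.
have := @lead_coef_comp _ p ('X + c%:P) ltac:(by rewrite size_XaddC); rewrite lead_coefXaddC expr1n mulr1.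
by rewrite /lead_coef hsz heq.
Qed.

Lemma coefMXaddC' (p : {poly R}) a i :
  (p * 'X + a%:P)`_i = if i is i'.+1 then p`_i' else a.
Proof. by rewrite coefD coefMX coefC; case: i => [|i] /=; rewrite ?add0r ?addr0. Qed.

Lemma compXaddC_coef (p : {poly R}) c : forall j, (size p <= j.+2)%N ->
  (p \Po ('X + c%:P))`_j = p`_j + p`_j.+1 * c *+ j.+1.
Proof.
elim/poly_ind: p => [|p a IH] j hs.
  by rewrite comp_poly0 !coef0 mul0r mul0rn addr0.
rewrite comp_poly_MXaddC mulrDr coefD coefC coefD coefMX coefMC.
rewrite !coefMXaddC'.
have hp : (size p <= j.+1)%N.
  move: hs; rewrite size_MXaddC; case: eqP => [->|_] //; rewrite size_poly0 //.
case: j hs hp => [|i] hs hp /=.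
  by rewrite compXaddC_top // add0r mulr1n addrC.
rewrite addr0 IH // (compXaddC_top _ hp) -addrA; congr (_ + _).
by rewrite [in RHS]mulrSr.
Qed.

End Poly2.

Section Poly3.
Variables (K : fieldType) (L : closedFieldType) (iota : {rmorphism K -> L}).
Local Notation fp := (map_poly iota).
Local Notation mp := (is_minpoly iota).

Lemma dnmc_neq0 d : deg_not_mult_char K d -> (0 < d)%N -> d%:R != 0 :> K.
Proof.
move=> hd d0; apply/negP => /eqP h0.
have [p pc] := natf0_pchar d0 (introT eqP h0).
by have := hd p pc; rewrite (dvdn_pcharf pc) h0 eqxx.
Qed.

Lemma mp_sep f x : mp f x -> ((size f).-1)%:R != 0 :> K -> ~~ root (fp f^`()) x.
Proof.
move=> hf hd; apply/negP => r.
have [fm fr fmin] := hf; have s2 := mp_size hf.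
have d0 : f^`() = 0.
  apply/eqP; apply: contraT => h; have := fmin _ h r.
  by rewrite leqNgt lt_size_deriv // monic_neq0.
have := coef_deriv f (size f).-2; rewrite d0 coef0.
have e : (size f).-2.+1 = (size f).-1 by move: s2; clear; lia.
rewrite e -/(lead_coef f) (monicP fm) => /esym/eqP; by rewrite (negPf hd).
Qed.

Lemma mp_shift f x c : mp f x -> mp (f \Po ('X + c%:P)) (x - iota c).
Proof.
move=> hf; have [fm fr fmin] := hf.
have sz q : size (q \Po ('X + c%:P)) = size q by rewrite size_comp_poly2 ?size_XaddC.
split.
- apply/monicP; rewrite (@lead_coef_comp _ f ('X + c%:P)) ?size_XaddC //.
  by rewrite lead_coefXaddC expr1n mulr1 (monicP fm).
- by rewrite /root map_comp_poly horner_comp map_polyXaddC hornerD hornerX hornerC subrK.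
- move=> q q0 qr; rewrite sz.
  have q'0 : q \Po ('X - c%:P) != 0.
    by rewrite -size_poly_eq0 size_comp_poly2 ?size_XsubC // size_poly_eq0.
  have := fmin _ q'0; rewrite size_comp_poly2 ?size_XsubC //; apply.
  by rewrite /root map_comp_poly horner_comp rmorphB /= map_polyX map_polyC hornerD hornerX hornerN hornerC.
Qed.

Lemma shift_coef (f : {poly K}) c : f \is monic -> (1 < size f)%N ->
  (f \Po ('X + c%:P))`_((size f).-2) = f`_((size f).-2) + c *+ (size f).-1.
Proof.
move=> fm s2; rewrite compXaddC_coef; last by move: s2; clear; lia.
have e : (size f).-2.+1 = (size f).-1 by move: s2; clear; lia.
by rewrite e -/(lead_coef f) (monicP fm) mul1r.
Qed.

End Poly3.

Lemma sep_uniq (F : fieldType) (zs : seq F) :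
  (forall x, root (\prod_(z <- zs) ('X - z%:P)) x ->
     (\prod_(z <- zs) ('X - z%:P))^`().[x] != 0) -> uniq zs.
Proof.
elim: zs => [//|z zs IH] h /=.
have hd : forall x, (\prod_(y <- z :: zs) ('X - y%:P))^`().[x] =
   (\prod_(y <- zs) ('X - y%:P)).[x] + (x - z) * (\prod_(y <- zs) ('X - y%:P))^`().[x].
  by move=> x; rewrite big_cons derivM derivXsubC mul1r hornerD hornerM hornerXsubC.
apply/andP; split.
  apply/negP => zz; have := h z; rewrite hd subrr mul0r addr0.
  have r : root (\prod_(y <- zs) ('X - y%:P)) z by rewrite root_prod_XsubC.
  have rz : root (\prod_(y <- z :: zs) ('X - y%:P)) z.
    by rewrite big_cons rootM root_XsubC eqxx.
  by move=> /(_ rz); rewrite (eqP r) eqxx.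
apply: IH => x rx; have := h x; rewrite hd (eqP rx) add0r.
rewrite big_cons rootM rx orbT => /(_ isT).
by rewrite mulf_eq0 negb_or => /andP[].
Qed.

Section Poly4.
Variables (K : fieldType) (L : closedFieldType) (iota : {rmorphism K -> L}).
Local Notation fp := (map_poly iota).
Local Notation mp := (is_minpoly iota).

Definition good (f : {poly K}) := exists a, mp f a /\ deg_not_mult_char K (size f).-1.

Definition c_of (f : {poly K}) : K := - f`_((size f).-2) / ((size f).-1)%:R.

Lemma good_mp f x : good f -> root (fp f) x -> mp f x.
Proof. by move=> [a [ha _]]; apply: mp_trans ha. Qed.

Lemma good_dn0 f : good f -> ((size f).-1)%:R != 0 :> K.
Proof.
move=> [a [ha hd]]; apply: (dnmc_neq0 hd); have := mp_size ha; clear; lia.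
Qed.

Lemma good_sep f x : good f -> root (fp f) x -> ~~ root (fp f^`()) x.
Proof. by move=> g r; apply: mp_sep (good_mp g r) (good_dn0 g). Qed.

Lemma good_eq f g x : good f -> good g -> root (fp f) x -> root (fp g) x -> f = g.
Proof. by move=> gf gg rf rg; apply: mp_uniq (good_mp gf rf) (good_mp gg rg). Qed.

Lemma root_fp_prod (fs : seq {poly K}) x :
  root (fp (\prod_(f <- fs) f)) x = has (fun f => root (fp f) x) fs.
Proof.
rewrite rmorph_prod /root horner_prod prodf_seq_eq0.
by apply: eq_has => f.
Qed.

Lemma dvdp_prod_mem (fs : seq {poly K}) f : f \in fs -> f %| \prod_(g <- fs) g.
Proof. by move=> ff; rewrite (big_rem f) //= dvdp_mulIl. Qed.

Lemma prod_sep (fs : seq {poly K}) x : uniq fs -> {in fs, forall f, good f} ->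
  root (fp (\prod_(f <- fs) f)) x -> ~~ root (fp (\prod_(f <- fs) f)^`()) x.
Proof.
move=> u g; rewrite root_fp_prod => /hasP[f ff rf].
rewrite (big_rem f) //= derivM rmorphD !rmorphM /= /root hornerD !hornerM.
rewrite (eqP rf) mul0r addr0 mulf_eq0 negb_or.
apply/andP; split; first exact: good_sep (g _ ff) rf.
rewrite -/(root _ _) root_fp_prod; apply/hasP => -[h hh rh].
have hf := good_eq (g _ ff) (g h (mem_rem hh)) rf rh.
by move: hh; rewrite -hf mem_rem_uniqF.
Qed.

Lemma crt (fs : seq {poly K}) : uniq fs -> {in fs, forall f, good f} ->
  exists h, forall f, f \in fs -> f %| h - (c_of f)%:P.
Proof.
elim: fs => [|f fs IH] /=; first by exists 0.
move=> /andP[ffs u] g.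
have g' : {in fs, forall f, good f} by move=> x hx; apply: g; rewrite inE hx orbT.
have [h' hh'] := IH u g'.
set Q := \prod_(g <- fs) g.
have cop : coprimep f Q.
  rewrite -(coprimep_map iota); apply: Pdiv.ClosedField.root_coprimep => x rx.
  rewrite -/(root _ _) root_fp_prod; apply/hasP => -[h hh rh].
  have e := good_eq (g _ (mem_head _ _)) (g' h hh) rx rh.
  by move: ffs; rewrite e hh.
have [[u1 u2] /= e] := Bezout_eq1_coprimepP _ _ cop.
exists (h' + u2 * Q * ((c_of f)%:P - h')) => k; rewrite inE => /orP[/eqP->|kk].
  apply/dvdpP; exists ((h' - (c_of f)%:P) * u1).
  have e' : u2 * Q = 1 - u1 * f by rewrite -e; ring.
  rewrite e'; ring.
have := hh' _ kk; have : k %| Q by apply: dvdp_prod_mem.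
move=> /dvdpP[q1 ->] /dvdpP[q2 e2]; apply/dvdpP.
exists (q2 + u2 * q1 * ((c_of f)%:P - h')).
rewrite mulrDl -e2; ring.
Qed.

End Poly4.

Lemma taylor1 (R : comNzRingType) (p : {poly R}) x c :
  exists q, p.[x + c] = p.[x] + p^`().[x] * c + c ^+ 2 * q.
Proof.
elim/poly_ind: p => [|p a [q IH]]; first by exists 0; rewrite deriv0 !horner0; ring.
exists (p^`().[x] + q * (x + c)).
rewrite derivMXaddC !hornerMXaddC hornerD hornerM hornerX IH; ring.
Qed.

Section Newton.
Variable (K : fieldType).

Lemma taylor_comp (P s c : {poly K}) :
  exists q, P \Po (s + c) = P \Po s + (P^`() \Po s) * c + c ^+ 2 * q.
Proof.
have [q hq] := taylor1 (P ^:P) s c; exists q.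
by rewrite /comp_poly hq deriv_map.
Qed.

Lemma comp_diff (P s : {poly K}) : exists r, P \Po s = P + (s - 'X) * r.
Proof.
have [q hq] := taylor1 (P ^:P) 'X (s - 'X).
exists ((P^:P)^`().['X] + (s - 'X) * q).
have e : 'X + (s - 'X) = s by rewrite addrC subrK.
rewrite /comp_poly -e hq -/(comp_poly 'X P) comp_polyXr; ring.
Qed.

Lemma newton (P : {poly K}) : coprimep P P^`() -> forall k,
  exists s, (P %| s - 'X) /\ (P ^+ k.+1 %| P \Po s).
Proof.
move=> cop; have [[u1 u2] /= e] := Bezout_eq1_coprimepP _ _ cop.
elim=> [|k [s [/dvdpP[b hb] /dvdpP[a ha]]]].
  by exists 'X; rewrite subrr dvdp0 expr1 comp_polyXr dvdpp.
set c := - (P \Po s) * u2.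
exists (s + c); split.
  apply/dvdpP; exists (b - P ^+ k * a * u2).
  rewrite addrAC hb /c ha exprS; ring.
have [q hq] := taylor_comp P s c.
have [r hr] := comp_diff P^`() s.
apply/dvdpP; exists (a * u1 - a * b * r * u2 + P ^+ k * a ^+ 2 * u2 ^+ 2 * q).
rewrite hq hr /c ha hb !exprS.
apply/eqP; rewrite -subr_eq0.
set Pk := P ^+ k.
have -> : forall Z : {poly K}, Z = (u1 * P + u2 * P^`() - 1) * (- (P * Pk * a)) -> Z == 0.
  by move=> Z ->; rewrite e subrr mul0r.
- by [].
ring.
Qed.

End Newton.

Section Mx.
Variable n : nat.

Lemma horner_mx_comp (R : comNzRingType) (A : 'M[R]_n.+1) (p q : {poly R}) :
  horner_mx A (p \Po q) = horner_mx (horner_mx A q) p.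
Proof.
elim/poly_ind: p => [|p a IH]; first by rewrite comp_poly0 !rmorph0.
rewrite comp_poly_MXaddC !rmorphD !rmorphM /= IH !horner_mx_C horner_mx_X.
by [].
Qed.

Lemma eig_horner (R : comNzRingType) (A : 'M[R]_n.+1) (v : 'rV_n.+1) a p :
  v *m A = a *: v -> v *m horner_mx A p = p.[a] *: v.
Proof.
move=> hv; elim/poly_ind: p => [|p c IH]; first by rewrite rmorph0 horner0 mulmx0 scale0r.
rewrite rmorphD rmorphM /= horner_mx_X horner_mx_C mulmxDr -mulmxE mulmxA IH.
rewrite -scalemxAl hv scalerA mul_mx_scalar hornerMXaddC scalerDl.
by [].
Qed.

Lemma poly_mx_horner (R : fieldType) (A : 'M[R]_n.+1) p : poly_mx p A = horner_mx A p.
Proof.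
have -> : horner_mx A p = horner_mx A (\poly_(i < size p) p`_i) by rewrite coefK.
rewrite poly_def linear_sum; apply: eq_bigr => i _.
by rewrite linearZ /= rmorphXn /= horner_mx_X.
Qed.

Lemma horner_dvd0 (R : fieldType) (A : 'M[R]_n.+1) p q :
  p %| q -> horner_mx A p = 0 -> horner_mx A q = 0.
Proof. by move=> /dvdpP[r ->] h; rewrite rmorphM /= h mulr0. Qed.

Lemma diag_of_annih (F : fieldType) (A : 'M[F]_n.+1) (rs : seq F) : uniq rs ->
  horner_mx A (\prod_(x <- rs) ('X - x%:P)) = 0 -> diagonalizable A.
Proof.
move=> u h; apply/diagonalizableP; exists rs => //; exact: mxminpoly_min.
Qed.

Lemma annih_of_diag (F : fieldType) (A : 'M[F]_n.+1) : diagonalizable A ->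
  exists2 rs : seq F, uniq rs & horner_mx A (\prod_(x <- rs) ('X - x%:P)) = 0.
Proof.
move=> /diagonalizableP[rs u d]; exists rs => //.
exact: horner_dvd0 d (mx_root_minpoly A).
Qed.

Lemma eig_root (F : fieldType) (A : 'M[F]_n.+1) p a :
  horner_mx A p = 0 -> eigenvalue A a -> root p a.
Proof.
move=> h /eigenvalueP[v hv v0]; have := eig_horner p hv.
rewrite h mulmx0 => /esym/eqP; rewrite scaler_eq0 (negPf v0) orbF.
by [].
Qed.

Lemma diag_horner (F : fieldType) (A : 'M[F]_n.+1) (zs : seq F) g :
  uniq zs -> horner_mx A (\prod_(z <- zs) ('X - z%:P)) = 0 ->
  diagonalizable (horner_mx A g) /\
  forall mu, eigenvalue (horner_mx A g) mu -> exists2 z, z \in zs & mu = g.[z].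
Proof.
move=> u h; set ys := undup (map (horner g) zs).
have hR : horner_mx (horner_mx A g) (\prod_(y <- ys) ('X - y%:P)) = 0.
  rewrite -horner_mx_comp; apply: horner_dvd0 h.
  apply: uniq_roots_dvdp; last by rewrite uniq_rootsE.
  apply/allP => z zz; rewrite /root horner_comp -/(root _ _) root_prod_XsubC.
  by rewrite mem_undup; apply: map_f.
split; first exact: diag_of_annih (undup_uniq _) hR.
move=> mu /(eig_root hR); rewrite root_prod_XsubC mem_undup => /mapP[z zz ->].
by exists z.
Qed.

Lemma rows_eq (F : fieldType) m (P : 'M[F]_n.+1) (X Y : 'M[F]_(n.+1, m)) :
  P \in unitmx -> (forall i, row i P *m X = row i P *m Y) -> X = Y.
Proof.
move=> Pu h; have e : P *m X = P *m Y.
  by apply/row_matrixP => i; rewrite !row_mul h.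
by rewrite -(mulKmx Pu X) e mulKmx.
Qed.

Lemma diag_for_rows (F : fieldType) (P A : 'M[F]_n.+1) : P \in unitmx ->
  is_diag_mx (conjmx P A) -> forall i, exists a, row i P *m A = a *: row i P.
Proof.
move=> Pu /diag_mxP[d hd] i; exists (d 0 i).
have e : P *m A = diag_mx d *m P.
  by rewrite -hd conjumx // mulmxKV.
by rewrite -row_mul e row_mul row_diag_mx -scalemxAl -rowE.
Qed.

End Mx.

Section Mx2.
Variable n : nat.

Lemma codiag2 (F : fieldType) (A B : 'M[F]_n.+1) :
  comm_mx A B -> diagonalizable A -> diagonalizable B ->
  exists2 P, P \in unitmx & [/\ is_diag_mx (conjmx P A) & is_diag_mx (conjmx P B)].
Proof.
move=> cAB dA dB.
have [P Pu /allP hP] : codiagonalizable [:: A; B].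
  apply/codiagonalizableP; split.
    move=> X Y; rewrite !inE => /orP[]/eqP-> /orP[]/eqP->; rewrite /comm_mx //;
    first [exact: cAB | exact: esym cAB].
  by move=> X; rewrite !inE => /orP[]/eqP->.
exists P => //; split.
  by have := hP A; rewrite !inE eqxx /=; apply.
by have := hP B; rewrite !inE eqxx orbT /=; apply.
Qed.

Lemma codiag_rows (F : fieldType) (A B : 'M[F]_n.+1) :
  comm_mx A B -> diagonalizable A -> diagonalizable B ->
  exists2 P, P \in unitmx & forall i, exists a b,
    row i P *m A = a *: row i P /\ row i P *m B = b *: row i P.
Proof.
move=> cAB dA dB; have [P Pu [hA hB]] := codiag2 cAB dA dB.
exists P => // i.
have [a ha] := diag_for_rows Pu hA i; have [b hb] := diag_for_rows Pu hB i.
by exists a, b.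
Qed.

Lemma diag_add (F : fieldType) (A B : 'M[F]_n.+1) :
  comm_mx A B -> diagonalizable A -> diagonalizable B -> diagonalizable (A + B).
Proof.
move=> cAB dA dB; have [P Pu [/diag_mxP[d hd] /diag_mxP[e he]]] := codiag2 cAB dA dB.
exists P => //; change (is_diag_mx (conjmx P (A + B))).
have -> : conjmx P (A + B) = conjmx P A + conjmx P B.
  by rewrite /conjmx mulmxDr mulmxDl.
by rewrite hd he -linearD /= diag_mx_is_diag.
Qed.

Lemma nil_sub (R : nzRingType) (A B : 'M[R]_n.+1) a b :
  comm_mx A B -> A ^+ a = 0 -> B ^+ b = 0 -> (A - B) ^+ (a + b) = 0.
Proof.
move=> cAB ha hb.
have c : GRing.comm A (- B) by apply: commrN; rewrite /GRing.comm -!mulmxE cAB.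
rewrite exprDn_comm // big1 // => i _.
case: (leqP b i) => hi.
  rewrite exprNn; have -> : B ^+ i = B ^+ (i - b) * B ^+ b by rewrite -exprD subnK.
  by rewrite hb !mulr0 mul0rn.
have hai : (a <= a + b - i)%N by move: hi; move: (nat_of_ord i) => k; lia.
by rewrite -(subnK hai) exprD ha mulr0 mul0r mul0rn.
Qed.

End Mx2.

Section MapDiag.
Variables (K : fieldType) (L : closedFieldType) (iota : {rmorphism K -> L}).
Variable n : nat.

Lemma map_prod_XsubC (rs : seq K) :
  map_poly iota (\prod_(x <- rs) ('X - x%:P)) = \prod_(x <- map iota rs) ('X - x%:P).
Proof. rewrite rmorph_prod big_map; apply: eq_bigr => x _. exact: map_polyXsubC. Qed.

Lemma map_mxXn (A : 'M[K]_n.+1) m : map_mx iota (A ^+ m) = (map_mx iota A) ^+ m.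
Proof. by elim: m => [|m IH]; rewrite ?expr0 ?map_mx1 // !exprS map_mxM IH. Qed.

Lemma map_diag (A : 'M[K]_n.+1) : diagonalizable A ->
  exists2 rs : seq K, uniq rs &
  horner_mx (map_mx iota A) (\prod_(x <- map iota rs) ('X - x%:P)) = 0.
Proof.
move=> /annih_of_diag[rs u h]; exists rs => //.
by rewrite -map_prod_XsubC -map_horner_mx h map_mx0.
Qed.

Lemma map_diag' (A : 'M[K]_n.+1) : diagonalizable A -> diagonalizable (map_mx iota A).
Proof.
move=> /map_diag[rs u h]; apply: diag_of_annih h.
by rewrite map_inj_uniq //; apply: fmorph_inj.
Qed.

End MapDiag.

Section Main.
Variables (K : fieldType) (L : closedFieldType) (iota : {rmorphism K -> L}).
Local Notation fp := (map_poly iota).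
Local Notation mp := (is_minpoly iota).
Variable n : nat.
Variable M : 'M[K]_n.+1.
Variable fs : seq {poly K}.
Hypothesis fs_uniq : uniq fs.
Hypothesis fs_good : {in fs, forall f, good iota f}.
Hypothesis fs_cover : forall z, eigenvalue (map_mx iota M) z ->
  has (fun f => root (fp f) z) fs.
Local Notation P := (\prod_(f <- fs) f).
Variables (s h : {poly K}) (k : nat).
Hypothesis hs1 : P %| s - 'X.
Hypothesis hs2 : horner_mx M (P \Po s) = 0.
Hypothesis hk : horner_mx M (P ^+ k) = 0.
Hypothesis hh : forall f, f \in fs -> f %| h - (c_of f)%:P.

Lemma P_monic : P \is monic.
Proof. by rewrite big_seq; apply: monic_prod => f ff; have [a [[]]] := fs_good ff. Qed.

Lemma P_split : exists2 ps, uniq ps & fp P = \prod_(z <- ps) ('X - z%:P).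
Proof.
have [ps hps] := closed_field_poly_normal (fp P).
rewrite lead_coef_map (monicP P_monic) rmorph1 scale1r in hps.
exists ps => //; apply: sep_uniq => x; rewrite -hps => rx.
by move: (prod_sep fs_uniq fs_good rx); rewrite deriv_map.
Qed.

Lemma key_root x : root (fp P) x ->
  exists f, [/\ f \in fs, mp f x, good iota f & (fp h).[x] = iota (c_of f)].
Proof.
rewrite root_fp_prod => /hasP[f ff rf]; exists f; split => //.
- exact: good_mp (fs_good ff) rf.
- exact: fs_good.
have := hh ff; rewrite -(dvdp_map iota) => /dvdpP[q hq].
move: rf; rewrite /root => /eqP rf.
have := congr1 (horner^~ x) hq; rewrite hornerM rf mulr0 rmorphB /= map_polyC.
by rewrite hornerD hornerN hornerC => /eqP; rewrite subr_eq0 => /eqP.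
Qed.

Local Notation S := (horner_mx M s).
Local Notation H := (horner_mx M (h \Po s)).
Local Notation V := (horner_mx M (s - (h \Po s))).
Local Notation N := (horner_mx M ('X - s)).

Lemma PS0 : horner_mx S P = 0.
Proof. by rewrite -horner_mx_comp. Qed.

Lemma S_annL : exists2 ps, uniq ps &
  [/\ horner_mx (map_mx iota S) (\prod_(z <- ps) ('X - z%:P)) = 0 &
      forall x, x \in ps -> root (fp P) x].
Proof.
have [ps u hps] := P_split; exists ps => //; split.
  by rewrite -hps -map_horner_mx PS0 map_mx0.
by move=> x xp; rewrite hps root_prod_XsubC.
Qed.

Lemma S_semi : semisimple_mx iota S.
Proof. by have [ps u [h0 _]] := S_annL; apply: diag_of_annih h0. Qed.

Lemma H_diag : diagonalizable H.
Proof.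
set cs := undup (map (@c_of K) fs).
apply: (@diag_of_annih _ _ _ cs (undup_uniq _)).
have -> : horner_mx M (h \Po s) = horner_mx S h by rewrite horner_mx_comp.
rewrite -horner_mx_comp; apply: horner_dvd0 PS0.
rewrite -(dvdp_map iota); have [ps u [_ hps]] := S_annL.
have [ps' u' hps'] := P_split; rewrite hps'.
apply: uniq_roots_dvdp; last by rewrite uniq_rootsE.
apply/allP => z zz; have rz : root (fp P) z by rewrite hps' root_prod_XsubC.
have [f [ff _ _ hz]] := key_root rz.
rewrite /root map_comp_poly horner_comp hz horner_map /=.
have : root (\prod_(c <- cs) ('X - c%:P)) (c_of f).
  by rewrite root_prod_XsubC mem_undup map_f.
by rewrite /root => /eqP ->; rewrite rmorph0.
Qed.


Lemma V_eq : V = horner_mx S ('X - h).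
Proof.
have -> : s - (h \Po s) = ('X - h) \Po s by rewrite comp_polyB comp_polyX.
by rewrite horner_mx_comp.
Qed.

Lemma HVS : H + V = S.
Proof. by rewrite -rmorphD /= addrC subrK. Qed.

Lemma SNM : S + N = M.
Proof. by rewrite -rmorphD /= addrC subrK horner_mx_X. Qed.

Lemma sumM : M = H + V + N.
Proof. by rewrite HVS SNM. Qed.

Lemma mapV : map_mx iota V = horner_mx (map_mx iota S) (fp ('X - h)).
Proof. by rewrite V_eq map_horner_mx. Qed.

Lemma V_eig mu : eigenvalue (map_mx iota V) mu ->
  exists f, [/\ good iota f, mp (f \Po ('X + (c_of f)%:P)) mu &
                 size (f \Po ('X + (c_of f)%:P)) = size f].
Proof.
have [ps u [h0 hr]] := S_annL; have [_ eg] := diag_horner (fp ('X - h)) u h0.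
rewrite mapV => /eg[z zp ->].
have [f [ff mf gf hz]] := key_root (hr _ zp).
exists f; split => //; last by rewrite size_comp_poly2 ?size_XaddC.
rewrite rmorphB /= map_polyX hornerD hornerN hornerX hz.
exact: mp_shift.
Qed.

Lemma V_semi : semisimple_mx iota V.
Proof.
have [ps u [h0 hr]] := S_annL; have [dg _] := diag_horner (fp ('X - h)) u h0.
by rewrite /semisimple_mx mapV.
Qed.

Lemma V_vert : K_vertical_mx iota V.
Proof.
split=> mu /V_eig[f [gf mf sf]].
  exists (f \Po ('X + (c_of f)%:P)) => //; rewrite sf.
  by have [a [_ hd]] := gf.
exists (f \Po ('X + (c_of f)%:P)); split => //; rewrite sf.
  by have [a [_ hd]] := gf.
have [a [ma _]] := gf.
rewrite shift_coef ?(mp_monic ma) ?(mp_size ma) //.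
rewrite /c_of -(mulr_natr (- _ / _)) mulfVK ?(good_dn0 gf) // subrr oppr0 mul0r //.
Qed.

Lemma N_nil : N ^+ k = 0.
Proof.
rewrite -rmorphXn /=; apply: horner_dvd0 hk; apply: dvdp_exp2r.
by rewrite -opprB dvdpNr.
Qed.

Lemma add_unique S' N' : additive_JC iota M S' N' -> S' = S /\ N' = N.
Proof.
move=> [eM ssS [b nN] cSN].
have cS'M : comm_mx S' M.
  by rewrite /comm_mx eM mulmxDr mulmxDl cSN.
have cS'S : comm_mx S' S by apply: comm_mx_horner.
have cMN' : comm_mx M N'.
  have -> : N' = M - S' by rewrite eM addrC addKr.
  by rewrite /comm_mx mulmxBr mulmxBl cS'M.
have cNN' : comm_mx N N' by apply: comm_horner_mx.
have nD := nil_sub cNN' N_nil nN.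
have eD : S' - S = N - N'.
  have e : S' + N' = S + N by rewrite -eM SNM.
  by rewrite -[S'](addrK N') e addrAC [S + N]addrC addrK.
have cL : comm_mx (map_mx iota S') (map_mx iota S) by rewrite /comm_mx -!map_mxM cS'S.
have [Q Qu hQ] := codiag_rows cL ssS (S_semi).
have eS : map_mx iota S' = map_mx iota S.
  apply: (rows_eq Qu) => i; have [a [c [ha hc]]] := hQ i; rewrite ha hc.
  set e := row i Q.
  have he : e *m map_mx iota (S' - S) = (a - c) *: e.
    by rewrite map_mxB mulmxBr ha hc scalerBl.
  have := eig_horner ('X ^+ (k + b)) he.
  rewrite rmorphXn /= horner_mx_X -map_mxXn eD nD map_mx0 mulmx0 hornerXn.
  move=> /esym/eqP; rewrite scaler_eq0 expf_eq0 subr_eq0 => /orP[/andP[_ /eqP->]|/eqP->] //.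
  by rewrite !scaler0.
have eS' : S' = S by apply: (@map_mx_inj _ _ iota).
split => //; apply/eqP; rewrite -(eqP (introT eqP SNM)) in eM.
by move: eM; rewrite eS' => /addrI ->.
Qed.

Lemma comp_unique H' V' N' : complete_JC iota M H' V' N' -> [/\ H' = H, V' = V & N' = N].
Proof.
move=> [eM [cHV cHN cVN] dH [[vreg vker] ssV] nN].
have dHL := map_diag' iota dH.
have cL : comm_mx (map_mx iota H') (map_mx iota V') by rewrite /comm_mx -!map_mxM cHV.
have [eS eN] : H' + V' = S /\ N' = N.
  apply: add_unique; split => //.
  - by rewrite /semisimple_mx map_mxD; apply: diag_add.
  - by rewrite /comm_mx mulmxDl mulmxDr cHN cVN.
suff eH : H' = H.
  by split => //; apply: (@addrI _ H); rewrite -{1}eH eS HVS.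
apply: (@map_mx_inj _ _ iota).
have [Q Qu hQ] := codiag_rows cL dHL ssV.
apply: (rows_eq Qu) => i; have [a [b [ha hb]]] := hQ i; rewrite ha.
set e := row i Q.
have [->|e0] := eqVneq e 0; first by rewrite mul0mx scaler0.
have hS : e *m map_mx iota S = (a + b) *: e by rewrite -eS map_mxD mulmxDr ha hb scalerDl.
have rl : root (fp P) (a + b).
  have := eig_horner (fp P) hS; rewrite -map_horner_mx PS0 map_mx0 mulmx0.
  by move=> /esym/eqP; rewrite scaler_eq0 (negPf e0) orbF.
have [f [ff mf gf hf]] := key_root rl.
have -> : map_mx iota H = horner_mx (map_mx iota S) (fp h).
  by rewrite -map_horner_mx horner_mx_comp.
rewrite (eig_horner _ hS) hf; congr (_ *: _).
have [rs _ hrs] := map_diag iota dH.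
have := eig_root hrs (introT eigenvalueP (ex_intro2 _ _ e ha e0)).
rewrite root_prod_XsubC => /mapP[x _ ax]; rewrite ax.
have := vker b (introT eigenvalueP (ex_intro2 _ _ e hb e0)).
move=> [g [mg dg cg]].
have d0 : ((size g).-1)%:R != 0 :> K.
  by apply: (dnmc_neq0 dg); have := mp_size mg; clear; lia.
have g0 : g`_(size g).-2 = 0.
  by move: cg => /eqP; rewrite mulf_eq0 invr_eq0 (negPf d0) orbF oppr_eq0 => /eqP.
have mg' := mp_shift (- x) mg.
have e1 : b - iota (- x) = a + b by rewrite rmorphN opprK addrC ax.
rewrite e1 in mg'.
have efg := mp_uniq mf mg'.
have sz : size f = size g by rewrite efg size_comp_poly2 ?size_XaddC.
rewrite /c_of efg size_comp_poly2 ?size_XaddC // shift_coef ?(mp_monic mg) ?(mp_size mg) //.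
by rewrite g0 add0r mulNrn opprK -(mulr_natr x) mulfK.
Qed.


Lemma main_result : exists H V N : 'M[K]_n.+1,
    [/\ complete_JC iota M H V N,
        (forall H' V' N' : 'M[K]_n.+1, complete_JC iota M H' V' N' ->
           [/\ H' = H, V' = V & N' = N]),
        [/\ is_poly_in M H, is_poly_in M V & is_poly_in M N],
        additive_JC iota M (H + V) N &
        (forall S N' : 'M[K]_n.+1, additive_JC iota M S N' ->
           S = H + V /\ N' = N)].
Proof.
exists H, V, N; split.
- split; first exact: sumM.
  + by split; apply: comm_horner_mx2.
  + exact: H_diag.
  + split; [exact: V_vert | exact: V_semi].
  + by exists k; apply: N_nil.
- exact: comp_unique.
- by split; [exists (h \Po s) | exists (s - (h \Po s)) | exists ('X - s)];
    rewrite poly_mx_horner.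
- rewrite HVS; split; first by rewrite SNM.
  + exact: S_semi.
  + by exists k; apply: N_nil.
  + exact: comm_horner_mx2.
- by move=> S' N' /add_unique; rewrite HVS.
Qed.

End Main.

Section Final.
Variables (K : fieldType) (L : closedFieldType) (iota : {rmorphism K -> L}).
Local Notation fp := (map_poly iota).

Lemma fs_exists (zs : seq L) : (forall z, z \in zs -> K_regular_elt iota z) ->
  exists fs, [/\ uniq fs, {in fs, forall f, good iota f} &
     forall z, z \in zs -> has (fun f => root (fp f) z) fs].
Proof.
elim: zs => [|z zs IH] hz; first by exists [::].
have hz' : forall y, y \in zs -> K_regular_elt iota y.
  by move=> y hy; apply: hz; rewrite inE hy orbT.
have [fs [u g c]] := IH hz'.
have [p mp hd] := hz z (mem_head _ _).
have gp : good iota p by exists z.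
case pf : (p \in fs).
  exists fs; split => // y; rewrite inE => /orP[/eqP->|/c //].
  by apply/hasP; exists p => //; case: mp.
exists (p :: fs); split.
- by rewrite /= pf u.
- by move=> f; rewrite inE => /orP[/eqP->|/g].
- move=> y; rewrite inE => /orP[/eqP->|/c hy] /=; last by rewrite hy orbT.
  by case: mp => _ ->.
Qed.

Lemma prod_dvd_exp (zs : seq L) q : (forall z, z \in zs -> root q z) ->
  \prod_(z <- zs) ('X - z%:P) %| q ^+ size zs.
Proof.
elim: zs => [|z zs IH] hz; first by rewrite big_nil dvd1p.
rewrite big_cons /= exprS; apply: dvdp_mul.
  by rewrite dvdp_XsubCl; apply: hz; rewrite mem_head.
by apply: IH => y hy; apply: hz; rewrite inE hy orbT.
Qed.

Lemma main_pos n (M : 'M[K]_n.+1) : K_regular_mx iota M ->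
  exists H V N : 'M[K]_n.+1,
    [/\ complete_JC iota M H V N,
        (forall H' V' N' : 'M[K]_n.+1, complete_JC iota M H' V' N' ->
           [/\ H' = H, V' = V & N' = N]),
        [/\ is_poly_in M H, is_poly_in M V & is_poly_in M N],
        additive_JC iota M (H + V) N &
        (forall S N' : 'M[K]_n.+1, additive_JC iota M S N' ->
           S = H + V /\ N' = N)].
Proof.
move=> hreg.
have [zs hzs] := closed_field_poly_normal (char_poly (map_mx iota M)).
rewrite (monicP (char_poly_monic _)) scale1r in hzs.
have zeig z : z \in zs -> eigenvalue (map_mx iota M) z.
  by move=> zz; rewrite eigenvalue_root_char hzs root_prod_XsubC.
have [fs [u g c]] := fs_exists (fun z zz => hreg z (zeig z zz)).
set P := \prod_(f <- fs) f.
have hchar : char_poly M %| P ^+ size zs.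
  rewrite -(dvdp_map iota) map_char_poly hzs rmorphXn /=.
  apply: prod_dvd_exp => z /c; rewrite -/(root _ _) root_fp_prod.
  by [].
have hk : horner_mx M (P ^+ size zs) = 0 by apply: horner_dvd0 hchar (Cayley_Hamilton M).
have cop : coprimep P P^`().
  rewrite -(coprimep_map iota); apply: Pdiv.ClosedField.root_coprimep => x rx.
  exact: (prod_sep u g rx).
have [s [hs1 hs2']] := newton cop (size zs).
have hs2 : horner_mx M (P \Po s) = 0.
  apply: horner_dvd0 (Cayley_Hamilton M); apply: dvdp_trans hchar _.
  by apply: dvdp_trans hs2'; apply: dvdp_exp2l.
have [h hh] := crt u g.
exact: (main_result u g hs1 hs2 hk hh).
Qed.

End Final.

Unset Implicit Arguments.
Set Strict Implicit.

Theorem theorem2p6 (K : fieldType) (L : closedFieldType)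
    (iota : {rmorphism K -> L}) (n : nat) (M : 'M[K]_n) :
  algebraic_over iota ->
  K_regular_mx iota M ->
  exists H V N : 'M[K]_n,
    [/\ complete_JC iota M H V N,
        (forall H' V' N' : 'M[K]_n, complete_JC iota M H' V' N' ->
           [/\ H' = H, V' = V & N' = N]),
        [/\ is_poly_in M H, is_poly_in M V & is_poly_in M N],
        additive_JC iota M (H + V) N &
        (forall S N' : 'M[K]_n, additive_JC iota M S N' ->
           S = H + V /\ N' = N)].
Proof.
move=> _; case: n M => [|n] M hreg; last exact: main_pos.
have z0 (A : 'M[K]_0) : A = 0 by apply: thinmx0.
have zL (A : 'M[L]_0) : A = 0 by apply: thinmx0.
have noeig (A : 'M[L]_0) a : ~ eigenvalue A a.
  by rewrite /eigenvalue (zL (eigenspace A a)) eqxx.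
have d0 (A : 'M[L]_0) : diagonalizable A by rewrite (zL A); apply: diagonalizable0.
exists 0, 0, 0; split.
- split; first by rewrite (z0 M).
  + by split; rewrite /comm_mx !(z0 (_ *m _)).
  + exact: diagonalizable0.
  + by split; [split=> lam /noeig | apply: d0].
  + by exists 0%N; apply: z0.
- by move=> H' V' N' _; rewrite (z0 H') (z0 V') (z0 N').
- by split; exists 0; rewrite (z0 (poly_mx _ _)).
- split; first by rewrite (z0 M).
  + exact: d0.
  + by exists 0%N; apply: z0.
  + by rewrite /comm_mx !(z0 (_ *m _)).
- by move=> S N' _; rewrite (z0 S) (z0 N').
Qed.
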